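(* Let $n\ge1$ be an integer. For every valid configuration $c\in\Omega'_n$, there exist two strictly increasing sequences $A,B:\mathbb Z\to\mathbb Z$ such that: (1) the set of positions of junction tiles in $c$ is the Cartesian product $c^{-1}(J'_n)=A(\mathbb Z)\times B(\mathbb Z)$; (2) $A(k+1)-A(k)\in\{n,n+1\}$ for every $k\in\mathbb Z$; (3) $B(k+1)-B(k)\in\{n,n+1\}$ for every $k\in\mathbb Z$.
   Context: $V_n=\{(v_0,v_1,v_2)\in\mathbb{Z}^3: 0\le v_0\le v_1\le 1,\ v_1\le v_2\le n+1\}$, elements written as words $v_0v_1v_2$. A Wang tile is $t=(a,b,c,d)$ with $\mathrm{RIGHT}(t)=a$, $\mathrm{TOP}(t)=b$, $\mathrm{LEFT}(t)=c$, $\mathrm{BOTTOM}(t)=d$; $\hat t=(b,a,d,c)$, $\hat S=\{\hat t:t\in S\}$. Define (as (right, top, left, bottom)): $W_n=\{(11(i+1),11(j+1),11i,11j):1\le i,j\le n\}$; $B'_n=\{(00(i+1),111,00i,11n):0\le i\le n\}$; $G_n=\{(01(i+1),111,00i,11(n+1)):0\le i\le n\}$; $Y_n=\{(01(i+1),112,01i,11(n+1)):1\le i\le n\}$; $A_n=\{(00(i+1),112,01i,11n):1\le i\le n\}$; $J'_n=\{((0,k,l),(0,r,s),(0,s,r+n),(0,l,k+n)):(k,l),(r,s)\in\{(0,0),(0,1),(1,1)\}\}$ (junction tiles). $\mathcal T'_n=W_n\cup B'_n\cup G_n\cup Y_n\cup A_n\cup\hat B'_n\cup\hat G_n\cup\hat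 Y_n\cup\hat A_n\cup J'_n$. $\Omega'_n$ is the set of configurations $c:\mathbb Z^2\to\mathcal T'_n$ with $\mathrm{RIGHT}(c(\mathbf m))=\mathrm{LEFT}(c(\mathbf m+\mathbf e_1))$ and $\mathrm{TOP}(c(\mathbf m))=\mathrm{BOTTOM}(c(\mathbf m+\mathbf e_2))$ for all $\mathbf m$. *)

(* Defs.v *)
From Stdlib Require Import ZArith.
Open Scope Z_scope.

(* A color is a word v0 v1 v2, i.e. a triple of integers. *)
Definition color : Type := (Z * Z * Z)%type.

(* Wang tile t = (a,b,c,d) with RIGHT a, TOP b, LEFT c, BOTTOM d. *)
Record tile : Type := mkTile { RIGHT : color; TOP : color; LEFT : color; BOTTOM : color }.

Definition hat (t : tile) : tile := mkTile (TOP t) (RIGHT t) (BOTTOM t) (LEFT t).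

Definition hatS (S : tile -> Prop) (t : tile) : Prop := exists u, S u /\ t = hat u.

Definition W_n (n : Z) (t : tile) : Prop :=
  exists i j, 1 <= i <= n /\ 1 <= j <= n /\
    t = mkTile (1,1,i+1) (1,1,j+1) (1,1,i) (1,1,j).

Definition B'_n (n : Z) (t : tile) : Prop :=
  exists i, 0 <= i <= n /\ t = mkTile (0,0,i+1) (1,1,1) (0,0,i) (1,1,n).

Definition G_n (n : Z) (t : tile) : Prop :=
  exists i, 0 <= i <= n /\ t = mkTile (0,1,i+1) (1,1,1) (0,0,i) (1,1,n+1).

Definition Y_n (n : Z) (t : tile) : Prop :=
  exists i, 1 <= i <= n /\ t = mkTile (0,1,i+1) (1,1,2) (0,1,i) (1,1,n+1).

Definition A_n (n : Z) (t : tile) : Prop :=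
  exists i, 1 <= i <= n /\ t = mkTile (0,0,i+1) (1,1,2) (0,1,i) (1,1,n).

Definition KL (k l : Z) : Prop := (k = 0 /\ l = 0) \/ (k = 0 /\ l = 1) \/ (k = 1 /\ l = 1).

Definition J'_n (n : Z) (t : tile) : Prop :=
  exists k l r s, KL k l /\ KL r s /\
    t = mkTile (0,k,l) (0,r,s) (0,s,r+n) (0,l,k+n).

Definition T'_n (n : Z) (t : tile) : Prop :=
  W_n n t \/ B'_n n t \/ G_n n t \/ Y_n n t \/ A_n n t \/
  hatS (B'_n n) t \/ hatS (G_n n) t \/ hatS (Y_n n) t \/ hatS (A_n n) t \/
  J'_n n t.

Definition Omega'_n (n : Z) (c : Z * Z -> tile) : Prop :=
  (forall m, T'_n n (c m)) /\
  (forall x y, RIGHT (c (x, y)) = LEFT (c (x + 1, y))) /\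
  (forall x y, TOP (c (x, y)) = BOTTOM (c (x, y + 1))).

Definition strictly_increasing (A : Z -> Z) : Prop :=
  forall i j, i < j -> A i < A j.

(* Main.v *)
Require Import Defs.
From Stdlib Require Import ZArith Lia Classical ClassicalEpsilon.
Open Scope Z_scope.

Definition c0 (v : color) : Z := fst (fst v).
Definition c1 (v : color) : Z := snd (fst v).
Definition c2 (v : color) : Z := snd v.

Definition Facts (n : Z) (t : tile) : Prop :=
  (c0 (TOP t) = 0 \/ c0 (TOP t) = 1) /\
  (c0 (RIGHT t) = 0 \/ c0 (RIGHT t) = 1) /\
  c0 (TOP t) = c0 (BOTTOM t) /\
  c0 (RIGHT t) = c0 (LEFT t) /\
  (0 <= c1 (TOP t) <= 1) /\ (0 <= c1 (BOTTOM t) <= 1) /\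
  (0 <= c1 (LEFT t) <= 1) /\ (0 <= c1 (RIGHT t) <= 1) /\
  (c0 (TOP t) = 1 -> c2 (RIGHT t) = c2 (LEFT t) + 1 /\ 0 <= c2 (LEFT t) <= n) /\
  (c0 (TOP t) = 1 -> c0 (RIGHT t) = 0 ->
     c2 (TOP t) = 1 + c1 (LEFT t) /\ c2 (BOTTOM t) = n + c1 (RIGHT t)) /\
  (c0 (TOP t) = 0 -> c0 (RIGHT t) = 1 ->
     c2 (RIGHT t) = 1 + c1 (BOTTOM t) /\ c2 (LEFT t) = n + c1 (TOP t)) /\
  (c0 (TOP t) = 0 -> c0 (RIGHT t) = 0 ->
     J'_n n t /\ c2 (RIGHT t) = c1 (BOTTOM t) /\ c2 (LEFT t) = n + c1 (TOP t) /\
     (c1 (BOTTOM t) = 0 -> c1 (RIGHT t) = 0) /\ (c1 (TOP t) = 1 -> c1 (LEFT t) = 1)) /\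
  (J'_n n t -> c0 (TOP t) = 0 /\ c0 (RIGHT t) = 0).

Ltac solve_facts :=
  unfold Facts, c0, c1, c2; cbn;
  repeat match goal with |- _ /\ _ => split | |- _ -> _ => intro end;
  try lia; try (exfalso; lia); try assumption;
  try (match goal with H: J'_n _ _ |- _ =>
         let E := fresh in destruct H as (?&?&?&?&_&_&E); injection E; intros; lia end).

Lemma tile_facts n t : 1 <= n -> T'_n n t -> Facts n t.
Proof.
  intros hn Ht.
  destruct Ht as [H|[H|[H|[H|[H|[H|[H|[H|[H|H]]]]]]]]].
  - destruct H as (i&j&Hi&Hj&->). solve_facts.
  - destruct H as (i&Hi&->). solve_facts.
  - destruct H as (i&Hi&->). solve_facts.
  - destruct H as (i&Hi&->). solve_facts.
  - destruct H as (i&Hi&->). solve_facts.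
  - destruct H as (u&(i&Hi&->)&->). solve_facts.
  - destruct H as (u&(i&Hi&->)&->). solve_facts.
  - destruct H as (u&(i&Hi&->)&->). solve_facts.
  - destruct H as (u&(i&Hi&->)&->). solve_facts.
  - pose proof H as HJ.
    destruct H as (k&l&r&s&Hkl&Hrs&->).
    destruct Hkl as [[-> ->]|[[-> ->]|[-> ->]]];
    destruct Hrs as [[-> ->]|[[-> ->]|[-> ->]]]; solve_facts.
Qed.

Lemma hat_T n t : T'_n n t -> T'_n n (hat t).
Proof.
  intros Ht; unfold T'_n.
  destruct Ht as [H|[H|[H|[H|[H|[H|[H|[H|[H|H]]]]]]]]].
  - left. destruct H as (i&j&Hi&Hj&->). exists j, i. cbn. auto.
  - do 5 right; left. exists t; auto.
  - do 6 right; left. exists t; auto.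
  - do 7 right; left. exists t; auto.
  - do 8 right; left. exists t; auto.
  - right; left. destruct H as (u&Hu&->). destruct u; exact Hu.
  - do 2 right; left. destruct H as (u&Hu&->). destruct u; exact Hu.
  - do 3 right; left. destruct H as (u&Hu&->). destruct u; exact Hu.
  - do 4 right; left. destruct H as (u&Hu&->). destruct u; exact Hu.
  - do 9 right. destruct H as (k&l&r&s&Hkl&Hrs&->). exists r, s, k, l. cbn. auto.
Qed.
Definition tr (c : Z * Z -> tile) : Z * Z -> tile := fun m => hat (c (snd m, fst m)).

Lemma tr_omega n c : Omega'_n n c -> Omega'_n n (tr c).
Proof.
  intros (H1&H2&H3). split; [|split].
  - intro m. apply hat_T. apply H1.
  - intros x y. cbn. apply H3.
  - intros x y. cbn. apply H2.
Qed.

Lemma const_Z (f : Z -> Z) : (forall x, f (x + 1) = f x) -> forall x, f x = f 0.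
Proof.
  intros H x. induction x using Z.peano_ind.
  - reflexivity.
  - rewrite <- Z.add_1_r, H. exact IHx.
  - rewrite <- IHx. rewrite <- (H (Z.pred x)). rewrite Z.add_1_r, Z.succ_pred. reflexivity.
Qed.

Definition colP (c : Z * Z -> tile) (x : Z) : Prop := c0 (TOP (c (x, 0))) = 0.

Lemma colconst n c : 1 <= n -> Omega'_n n c ->
  forall x y, c0 (TOP (c (x, y))) = c0 (TOP (c (x, 0))).
Proof.
  intros hn hc x. pose proof hc as (HT&HH&HV).
  apply (const_Z (fun y => c0 (TOP (c (x, y))))).
  intro y. cbn beta.
  destruct (tile_facts n _ hn (HT (x, y+1))) as (_&_&E&_).
  rewrite E, <- HV. reflexivity.
Qed.

Lemma rowconst n c : 1 <= n -> Omega'_n n c ->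
  forall x y, c0 (RIGHT (c (x, y))) = c0 (RIGHT (c (0, y))).
Proof.
  intros hn hc x y. pose proof hc as (HT&HH&HV).
  apply (const_Z (fun x => c0 (RIGHT (c (x, y))))).
  intro z. cbn beta.
  destruct (tile_facts n _ hn (HT (z+1, y))) as (_&_&_&E&_).
  rewrite E, <- HH. reflexivity.
Qed.

Lemma window n c : 1 <= n -> Omega'_n n c ->
  forall x, exists z, x <= z <= x + n + 1 /\ colP c z.
Proof.
  intros hn hc x. pose proof hc as (HT&HH&HV).
  destruct (classic (exists z, x <= z <= x + n + 1 /\ colP c z)) as [H|H]; [exact H|exfalso].
  assert (all1 : forall z, x <= z <= x + n + 1 -> c0 (TOP (c (z, 0))) = 1).
  { intros z Hz. destruct (tile_facts n _ hn (HT (z, 0))) as ([E|E]&_); auto.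
    exfalso; apply H; exists z; split; auto. }
  assert (chain : forall k : nat, Z.of_nat k <= n + 1 ->
    c2 (LEFT (c (x + Z.of_nat k, 0))) = c2 (LEFT (c (x, 0))) + Z.of_nat k).
  { induction k as [|k IH]; intro Hk.
    - replace (x + Z.of_nat 0) with x by lia. lia.
    - replace (x + Z.of_nat (S k)) with (x + Z.of_nat k + 1) by lia.
      rewrite <- HH.
      destruct (tile_facts n _ hn (HT (x + Z.of_nat k, 0))) as (_&_&_&_&_&_&_&_&FW&_).
      destruct (FW (all1 (x + Z.of_nat k) ltac:(lia))) as [E _].
      rewrite E, IH by lia. lia. }
  specialize (chain (Z.to_nat (n+1)) ltac:(lia)).
  replace (x + Z.of_nat (Z.to_nat (n + 1))) with (x + (n+1)) in chain by lia.
  destruct (tile_facts n _ hn (HT (x + (n+1), 0))) as (_&_&_&_&_&_&_&_&FW1&_).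
  destruct (tile_facts n _ hn (HT (x, 0))) as (_&_&_&_&_&_&_&_&FW2&_).
  destruct (FW1 (all1 (x+(n+1)) ltac:(lia))) as [_ B1].
  destruct (FW2 (all1 x ltac:(lia))) as [_ B2].
  lia.
Qed.
Ltac facts n hn HT x y :=
  let F := fresh "F" in
  pose proof (tile_facts n _ hn (HT (x, y))) as F.

Lemma gap n c : 1 <= n -> Omega'_n n c ->
  forall p q, colP c p -> colP c q -> p < q -> (forall x, p < x < q -> ~ colP c x) ->
  q - p = n \/ q - p = n + 1.
Proof.
  intros hn hc p q Hp Hq Hpq Hbet. pose proof hc as (HT&HH&HV).
  pose proof (colconst n c hn hc) as CC.
  pose proof (rowconst n c hn hc) as RC.
  assert (col1 : forall x y, p < x < q -> c0 (TOP (c (x, y))) = 1).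
  { intros x y Hx. rewrite CC.
    destruct (tile_facts n _ hn (HT (x, 0))) as ([E|E]&_); auto.
    exfalso; apply (Hbet x Hx); exact E. }
  assert (colp : forall y, c0 (TOP (c (p, y))) = 0) by (intro y; rewrite CC; exact Hp).
  assert (colq : forall y, c0 (TOP (c (q, y))) = 0) by (intro y; rewrite CC; exact Hq).
  assert (chain : forall y (k : nat), p + 1 + Z.of_nat k <= q ->
    c2 (LEFT (c (p + 1 + Z.of_nat k, y))) = c2 (RIGHT (c (p, y))) + Z.of_nat k).
  { intros y. induction k as [|k IH]; intro Hk.
    - replace (p + 1 + Z.of_nat 0) with (p + 1) by lia. rewrite <- HH. lia.
    - replace (p + 1 + Z.of_nat (S k)) with (p + 1 + Z.of_nat k + 1) by lia.
      rewrite <- HH.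
      destruct (tile_facts n _ hn (HT (p + 1 + Z.of_nat k, y))) as (_&_&_&_&_&_&_&_&FW&_).
      destruct (FW (col1 (p + 1 + Z.of_nat k) y ltac:(lia))) as [E _].
      rewrite E, IH by lia. lia. }
  assert (key : forall y, c2 (LEFT (c (q, y))) = c2 (RIGHT (c (p, y))) + (q - p - 1)).
  { intro y. specialize (chain y (Z.to_nat (q - p - 1)) ltac:(lia)).
    replace (p + 1 + Z.of_nat (Z.to_nat (q - p - 1))) with q in chain by lia.
    rewrite chain. lia. }
  assert (eq1 : forall y, c0 (RIGHT (c (0, y))) = 1 ->
     q - p = n + c1 (TOP (c (q, y))) - c1 (BOTTOM (c (p, y)))).
  { intros y Hy.
    destruct (tile_facts n _ hn (HT (p, y))) as (_&_&_&_&_&_&_&_&_&_&FVp&_).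
    destruct (tile_facts n _ hn (HT (q, y))) as (_&_&_&_&_&_&_&_&_&_&FVq&_).
    destruct (FVp (colp y) ltac:(rewrite RC; exact Hy)) as [Ep _].
    destruct (FVq (colq y) ltac:(rewrite RC; exact Hy)) as [_ Eq].
    specialize (key y). lia. }
  assert (eq0 : forall y, c0 (RIGHT (c (0, y))) = 0 ->
     q - p = n + 1 + c1 (TOP (c (q, y))) - c1 (BOTTOM (c (p, y)))).
  { intros y Hy.
    destruct (tile_facts n _ hn (HT (p, y))) as (_&_&_&_&_&_&_&_&_&_&_&FJp&_).
    destruct (tile_facts n _ hn (HT (q, y))) as (_&_&_&_&_&_&_&_&_&_&_&FJq&_).
    destruct (FJp (colp y) ltac:(rewrite RC; exact Hy)) as (_&Ep&_).
    destruct (FJq (colq y) ltac:(rewrite RC; exact Hy)) as (_&_&Eq&_).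
    specialize (key y). lia. }
  assert (bnd : forall y, 0 <= c1 (TOP (c (q, y))) <= 1 /\ 0 <= c1 (BOTTOM (c (p, y))) <= 1).
  { intro y.
    destruct (tile_facts n _ hn (HT (p, y))) as (_&_&_&_&_&B1&_).
    destruct (tile_facts n _ hn (HT (q, y))) as (_&_&_&_&B2&_). lia. }
  destruct (window n (tr c) hn (tr_omega n c hc) 0) as (y0&_&Hy0).
  change (c0 (RIGHT (c (0, y0))) = 0) in Hy0.
  specialize (eq0 y0 Hy0) as E0. pose proof (bnd y0) as B0.
  destruct (Z.le_gt_cases (q - p) (n + 1)) as [Hle|Hgt]; [lia|exfalso].
  assert (all0 : forall y, c0 (RIGHT (c (0, y))) = 0).
  { intro y. destruct (tile_facts n _ hn (HT (0, y))) as (_&[E|E]&_); auto.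
    specialize (eq1 y E). specialize (bnd y). lia. }
  assert (Rp : forall y, c1 (RIGHT (c (p, y))) = 0).
  { intro y. destruct (tile_facts n _ hn (HT (p, y))) as (_&_&_&_&_&_&_&_&_&_&_&FJp&_).
    destruct (FJp (colp y) ltac:(rewrite RC; apply all0)) as (_&_&_&H&_).
    apply H. specialize (eq0 y (all0 y)). specialize (bnd y). lia. }
  assert (Lq : forall y, c1 (LEFT (c (q, y))) = 1).
  { intro y. destruct (tile_facts n _ hn (HT (q, y))) as (_&_&_&_&_&_&_&_&_&_&_&FJq&_).
    destruct (FJq (colq y) ltac:(rewrite RC; apply all0)) as (_&_&_&_&H).
    apply H. specialize (eq0 y (all0 y)). specialize (bnd y). lia. }
  assert (diag : forall k : nat, p + 1 + Z.of_nat k <= q -> forall y,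
     c1 (LEFT (c (p + 1 + Z.of_nat k, y + Z.of_nat k))) <= 0).
  { induction k as [|k IH]; intros Hk y.
    - replace (p + 1 + Z.of_nat 0) with (p + 1) by lia.
      replace (y + Z.of_nat 0) with y by lia. rewrite <- HH, Rp. lia.
    - set (x := p + 1 + Z.of_nat k).
      replace (p + 1 + Z.of_nat (S k)) with (x + 1) by (unfold x; lia).
      replace (y + Z.of_nat (S k)) with (y + Z.of_nat k + 1) by lia.
      rewrite <- HH.
      destruct (tile_facts n _ hn (HT (x, y + Z.of_nat k))) as (_&_&_&_&_&_&_&_&_&FH1&_).
      destruct (tile_facts n _ hn (HT (x, y + Z.of_nat k + 1))) as (_&_&_&_&_&_&_&_&_&FH2&_).
      destruct (FH1 (col1 x _ ltac:(unfold x; lia)) ltac:(rewrite RC; apply all0)) as [T1 _].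
      destruct (FH2 (col1 x _ ltac:(unfold x; lia)) ltac:(rewrite RC; apply all0)) as [_ T2].
      rewrite HV in T1.
      specialize (IH ltac:(unfold x; lia) y). fold x in IH. lia. }
  specialize (diag (Z.to_nat (q - p - 1)) ltac:(lia) 0).
  replace (p + 1 + Z.of_nat (Z.to_nat (q - p - 1))) with q in diag by lia.
  rewrite Lq in diag. lia.
Qed.
Lemma least (P : Z -> Prop) : forall m : nat, forall a z,
  a <= z <= a + Z.of_nat m -> P z ->
  exists z', a <= z' /\ P z' /\ forall w, a <= w < z' -> ~ P w.
Proof.
  induction m as [|m IH]; intros a z Hz Pz.
  - exists z. split; [lia|split; auto]. intros w Hw. lia.
  - destruct (classic (P a)) as [Pa|nPa].
    + exists a. split; [lia|split; auto]. intros w Hw. lia.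
    + assert (z <> a) by (intro; subst; contradiction).
      destruct (IH (a + 1) z ltac:(lia) Pz) as (z'&H1&H2&H3).
      exists z'. split; [lia|split; auto].
      intros w Hw. destruct (Z.eq_dec w a); [subst; auto|apply H3; lia].
Qed.

Lemma enum (P : Z -> Prop) (n : Z) : 1 <= n ->
  (forall x, exists z, x <= z <= x + n + 1 /\ P z) ->
  (forall p q, P p -> P q -> p < q -> (forall x, p < x < q -> ~ P x) ->
     q - p = n \/ q - p = n + 1) ->
  exists A : Z -> Z, strictly_increasing A /\ (forall x, P x <-> exists i, x = A i) /\
    (forall k, A (k + 1) - A k = n \/ A (k + 1) - A k = n + 1).
Proof.
  intros hn win gap.
  assert (Hnext : forall p, exists q, p < q /\ P q /\ forall x, p < x < q -> ~ P x).
  { intro p. destruct (win (p + 1)) as (z&Hz&Pz).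
    destruct (least P (Z.to_nat (n + 1)) (p + 1) z ltac:(lia) Pz) as (z'&H1&H2&H3).
    exists z'. split; [lia|split; auto]. intros x Hx. apply H3. lia. }
  assert (Hprev : forall p, exists q, q < p /\ P q /\ forall x, q < x < p -> ~ P x).
  { intro p. destruct (win (p - n - 2)) as (z&Hz&Pz).
    destruct (least (fun w => P (- w)) (Z.to_nat (n + 1)) (1 - p) (- z) ltac:(lia)
               ltac:(cbv beta; rewrite Z.opp_involutive; exact Pz)) as (z'&H1&H2&H3).
    exists (- z'). split; [lia|split; auto]. intros x Hx.
    specialize (H3 (- x) ltac:(lia)). rewrite Z.opp_involutive in H3. exact H3. }
  assert (Enx : exists nx : Z -> Z, forall p, p < nx p /\ P (nx p) /\ forall x, p < x < nx p -> ~ P x).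
  { exists (fun p => proj1_sig (constructive_indefinite_description _ (Hnext p))).
    intro p. exact (proj2_sig (constructive_indefinite_description _ (Hnext p))). }
  assert (Epv : exists pv : Z -> Z, forall p, pv p < p /\ P (pv p) /\ forall x, pv p < x < p -> ~ P x).
  { exists (fun p => proj1_sig (constructive_indefinite_description _ (Hprev p))).
    intro p. exact (proj2_sig (constructive_indefinite_description _ (Hprev p))). }
  destruct Enx as (nx&Hnx). destruct Epv as (pv&Hpv).
  destruct (win 0) as (p0&_&P0).
  assert (nxpv : forall q, P q -> nx (pv q) = q).
  { intros q Pq. destruct (Hpv q) as (A1&A2&A3). destruct (Hnx (pv q)) as (B1&B2&B3).
    destruct (Z.lt_trichotomy (nx (pv q)) q) as [L|[L|L]]; auto.
    - exfalso. apply (A3 (nx (pv q))); auto; lia.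
    - exfalso. apply (B3 q); auto; lia. }
  set (F := fun m : nat => Nat.iter m nx p0).
  set (G := fun m : nat => Nat.iter m pv p0).
  assert (PF : forall m, P (F m)).
  { induction m as [|m IH]; [exact P0|]. apply (Hnx (F m)). }
  assert (PG : forall m, P (G m)).
  { induction m as [|m IH]; [exact P0|]. apply (Hpv (G m)). }
  set (A := fun k => if Z.ltb k 0 then G (Z.to_nat (- k)) else F (Z.to_nat k)).
  assert (PA : forall k, P (A k)).
  { intro k. unfold A. destruct (Z.ltb k 0); auto. }
  assert (A0 : A 0 = p0) by reflexivity.
  assert (Astep : forall k, A (k + 1) = nx (A k)).
  { intro k. destruct (Z.ltb_spec k 0) as [Hk|Hk].
    - assert (E : A k = pv (A (k + 1))).
      { unfold A. rewrite (proj2 (Z.ltb_lt k 0) Hk).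
        replace (Z.to_nat (- k)) with (S (Z.to_nat (- (k + 1)))) by lia.
        destruct (Z.ltb_spec (k + 1) 0) as [Hk1|Hk1].
        + reflexivity.
        + replace (k + 1) with 0 by lia. reflexivity. }
      rewrite E, nxpv; auto.
    - unfold A. rewrite (proj2 (Z.ltb_ge k 0) Hk).
      rewrite (proj2 (Z.ltb_ge (k + 1) 0) ltac:(lia)).
      replace (Z.to_nat (k + 1)) with (S (Z.to_nat k)) by lia. reflexivity. }
  assert (Alt : forall k, A k < A (k + 1)).
  { intro k. rewrite Astep. apply Hnx. }
  assert (incr : strictly_increasing A).
  { assert (H : forall m : nat, forall i, A i < A (i + Z.of_nat m + 1)).
    { induction m as [|m IH]; intro i.
      - replace (i + Z.of_nat 0 + 1) with (i + 1) by lia. apply Alt.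
      - replace (i + Z.of_nat (S m) + 1) with ((i + Z.of_nat m + 1) + 1) by lia.
        specialize (IH i). specialize (Alt (i + Z.of_nat m + 1)). lia. }
    intros i j Hij. specialize (H (Z.to_nat (j - i - 1)) i).
    replace (i + Z.of_nat (Z.to_nat (j - i - 1)) + 1) with j in H by lia. exact H. }
  assert (cover : forall d, exists k, A k <= p0 + d < A (k + 1)).
  { intro d. induction d using Z.peano_ind.
    - exists 0. rewrite A0. specialize (Alt 0). lia.
    - destruct IHd as (k&Hk).
      destruct (Z.eq_dec (p0 + Z.succ d) (A (k + 1))) as [E|E].
      + exists (k + 1). specialize (Alt (k + 1)). lia.
      + exists k. lia.
    - destruct IHd as (k&Hk).
      destruct (Z.eq_dec (p0 + d) (A k)) as [E|E].
      + exists (k - 1). replace (k - 1 + 1) with k by lia.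
        specialize (Alt (k - 1)). replace (k - 1 + 1) with k in Alt by lia. lia.
      + exists k. lia. }
  exists A. split; [exact incr|split].
  - intro x. split.
    + intro Px. destruct (cover (x - p0)) as (k&Hk).
      exists k. destruct (Z.eq_dec x (A k)) as [E|E]; auto.
      exfalso. destruct (Hnx (A k)) as (_&_&H3). apply (H3 x); [|exact Px].
      rewrite <- Astep. lia.
    + intros (i&->). apply PA.
  - intro k. rewrite Astep. destruct (Hnx (A k)) as (H1&H2&H3).
    apply gap; auto.
Qed.

Lemma K1 n c : 1 <= n -> Omega'_n n c ->
  forall x y, J'_n n (c (x, y)) <-> colP c x /\ colP (tr c) y.
Proof.
  intros hn hc x y. pose proof hc as (HT&HH&HV).
  pose proof (colconst n c hn hc) as CC.
  pose proof (rowconst n c hn hc) as RC.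
  destruct (tile_facts n _ hn (HT (x, y))) as (_&_&_&_&_&_&_&_&_&_&_&FJ&JF).
  split.
  - intro HJ. destruct (JF HJ) as [E1 E2]. split.
    + unfold colP. rewrite <- (CC x y). exact E1.
    + change (c0 (RIGHT (c (0, y))) = 0). rewrite <- (RC x y). exact E2.
  - intros [H1 H2]. change (c0 (RIGHT (c (0, y))) = 0) in H2. unfold colP in H1.
    apply FJ; [rewrite CC; exact H1|rewrite RC; exact H2].
Qed.

Theorem lemma6p3 (n : Z) (hn : 1 <= n) (c : Z * Z -> tile) (hc : Omega'_n n c) :
  exists A B : Z -> Z,
    strictly_increasing A /\ strictly_increasing B /\
    (forall x y, J'_n n (c (x, y)) <-> (exists i j, x = A i /\ y = B j)) /\
    (forall k, A (k + 1) - A k = n \/ A (k + 1) - A k = n + 1) /\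
    (forall k, B (k + 1) - B k = n \/ B (k + 1) - B k = n + 1).
Proof.
  destruct (enum (colP c) n hn (window n c hn hc) (gap n c hn hc)) as (A&HA1&HA2&HA3).
  pose proof (tr_omega n c hc) as hc'.
  destruct (enum (colP (tr c)) n hn (window n (tr c) hn hc') (gap n (tr c) hn hc'))
    as (B&HB1&HB2&HB3).
  exists A, B. split; [auto|split; [auto|split; [|split; auto]]].
  intros x y. rewrite (K1 n c hn hc x y), HA2, HB2. split.
  - intros [(i&Hi) (j&Hj)]. exists i, j. auto.
  - intros (i&j&Hi&Hj). split; eauto.
Qed.
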